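(* Let $\mathbb{K}\in\{\mathbb{R},\mathbb{C}\}$ and let $\mathcal{X}$ be a topological $\mathbb{K}$-vector space whose topological dual $\mathcal{X}^{\ast}$ separates the points of $\mathcal{X}$. Let $F_1,F_2$ be nonempty weak*-closed subsets of $\mathcal{X}^{\ast}$ such that $d_H^{(A)}(F_1,F_2)=0$ for all $A\in\mathcal{X}$. Then $\overline{\mathrm{co}}F_1=\overline{\mathrm{co}}F_2$.
   Context: Topological vector spaces are Hausdorff. $\mathcal{X}^{\ast}$ carries the weak* topology. For nonempty weak*-closed $F,\tilde F\subseteq\mathcal{X}^{\ast}$ and $A\in\mathcal{X}$, $d_H^{(A)}(F,\tilde F)=\max\{\sup_{\sigma\in F}\inf_{\tilde\sigma\in\tilde F}|(\sigma-\tilde\sigma)(A)|,\ \sup_{\tilde\sigma\in\tilde F}\inf_{\sigma\in F}|(\sigma-\tilde\sigma)(A)|\}\in[0,\infty]$. $\overline{\mathrm{co}}F$ denotes the weak*-closure of the convex hull of $F$. *)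

(* Defs.v *)
From HB Require Import structures.
From mathcomp Require Import all_boot all_order all_algebra.
From mathcomp Require Import all_classical all_reals all_analysis.
From mathcomp Require Export complex.

Set Implicit Arguments.
Unset Strict Implicit.
Unset Printing Implicit Defensive.

Import Order.TTheory GRing.Theory Num.Theory.
Local Open Scope classical_set_scope.
Local Open Scope ring_scope.

(* Functionals on X live in {ptws X -> K^o}: the functions X -> K with the
   topology of pointwise convergence.  Restricted to the dual X^{*} this is
   exactly the weak* topology. *)

Definition is_dual (K : numFieldType) (X : topologicalLmodType K)
    (f : {ptws X -> K^o}) : Prop :=
  (forall (a : K) (u v : X), f (a *: u + v) = a * f u + f v) /\
  continuous (f : X -> K^o).

(* weak*-closure (in X^{*}) of a set S of functionals: closure in the
   pointwise topology, intersected with X^{*} (subspace topology). *)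
Definition wstar_closure (K : numFieldType) (X : topologicalLmodType K)
    (S : set {ptws X -> K^o}) : set {ptws X -> K^o} :=
  closure S `&` (@is_dual K X).

Definition wstar_closed (K : numFieldType) (X : topologicalLmodType K)
    (S : set {ptws X -> K^o}) : Prop :=
  wstar_closure S `<=` S.

(* Convex hull: all finite convex combinations (nonnegative (real)
   coefficients summing to 1) of elements of S. *)
Definition conv_hull (K : numFieldType) (X : topologicalLmodType K)
    (S : set {ptws X -> K^o}) : set {ptws X -> K^o} :=
  [set g | exists (n : nat) (l : 'I_n -> K) (f : 'I_n -> {ptws X -> K^o}),
     [/\ (forall i, 0 <= l i), \sum_(i < n) l i = 1, (forall i, S (f i)) &
         g = (fun x : X => \sum_(i < n) l i * f i x)]].

Definition clco (K : numFieldType) (X : topologicalLmodType K)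
    (S : set {ptws X -> K^o}) : set {ptws X -> K^o} :=
  wstar_closure (conv_hull S).

(* d_H^{(A)}(F, G) in [0, +oo], where nK : K -> R is the absolute value
   of K (K = R or K = R[i]) with values in the reals R. *)
Definition dH_at (R : realType) (K : numFieldType) (nK : K -> R)
    (X : topologicalLmodType K) (F G : set {ptws X -> K^o}) (A : X) : \bar R :=
  maxe
    (ereal_sup [set ereal_inf [set ((nK (s A - t A))%:E)%E | t in G] | s in F])
    (ereal_sup [set ereal_inf [set ((nK (s A - t A))%:E)%E | s in F] | t in G]).

Definition prop3p10_over (R : realType) (K : numFieldType) (nK : K -> R) : Prop :=
  forall (X : topologicalLmodType K),
    hausdorff_space X ->
    (forall x y : X, x <> y -> exists f, @is_dual K X f /\ f x <> f y) ->
    forall F1 F2 : set {ptws X -> K^o},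
      F1 !=set0 -> F2 !=set0 ->
      F1 `<=` @is_dual K X -> F2 `<=` @is_dual K X ->
      wstar_closed F1 -> wstar_closed F2 ->
      (forall A : X, dH_at nK F1 F2 A = 0%E) ->
      clco F1 = clco F2.

(* Main.v *)
Require Import Defs.
From HB Require Import structures.
From mathcomp Require Import all_boot all_order all_algebra.
From mathcomp Require Import all_classical all_reals all_analysis.
From mathcomp Require Import complex.
From mathcomp Require Import ring lra.
Set Implicit Arguments.
Unset Strict Implicit.
Unset Printing Implicit Defensive.
Import Order.TTheory GRing.Theory Num.Theory.
Import numFieldTopology.Exports.
Local Open Scope classical_set_scope.
Local Open Scope ring_scope.

Section real.
Variable R : realType.
Variable m : nat.
Local Notation V := 'rV[R]_m.

Definition dotv (w x : V) : R := \sum_(i < m) w ord0 i * x ord0 i.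
Definition convP (P : set V) : set V :=
  [set q | exists n (l : 'I_n -> R) (p : 'I_n -> V),
    [/\ (forall i, 0 <= l i), \sum_(i < n) l i = 1, (forall i, P (p i)) &
        q = \sum_(i < n) l i *: p i]].

Lemma convP_sub P : P `<=` convP P.
Proof.
move=> x Px; exists 1%N, (fun _ => 1), (fun _ => x); split => //.
  by rewrite big_ord1.
by rewrite big_ord1 scale1r.
Qed.

Lemma convP_comb P x y t : convP P x -> convP P y -> 0 <= t <= 1 ->
  convP P ((1 - t) *: x + t *: y).
Proof.
move=> [n1 [l1 [p1 [l1p l1s p1P ->]]]] [n2 [l2 [p2 [l2p l2s p2P ->]]]] /andP[t0 t1].
exists (n1 + n2)%N, (fun k => match fintype.split k with inl i => (1 - t) * l1 i | inr j => t * l2 j end),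
  (fun k => match fintype.split k with inl i => p1 i | inr j => p2 j end); split.
- move=> k; case: (fintype.split k) => [i|j]; apply: mulr_ge0 => //; by rewrite subr_ge0.
- rewrite big_split_ord /=.
  under eq_bigr do rewrite (unsplitK (inl _)).
  under [X in _ + X]eq_bigr do rewrite (unsplitK (inr _)).
  by rewrite -!mulr_sumr l1s l2s !mulr1 subrK.
- by move=> k; case: (fintype.split k).
- apply/esym; rewrite big_split_ord /=.
  under eq_bigr do rewrite (unsplitK (inl _)).
  under [X in _ + X]eq_bigr do rewrite (unsplitK (inr _)).
  rewrite !scaler_sumr; congr (_ + _); apply: eq_bigr => i _; by rewrite scalerA.
Qed.

Lemma dotvDr w x y : dotv w (x + y) = dotv w x + dotv w y.
Proof. by rewrite /dotv -big_split; apply: eq_bigr => i _; rewrite mxE mulrDr. Qed.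
Lemma dotvDl w x y : dotv (x + y) w = dotv x w + dotv y w.
Proof. by rewrite /dotv -big_split; apply: eq_bigr => i _; rewrite mxE mulrDl. Qed.
Lemma dotvNr w x : dotv w (- x) = - dotv w x.
Proof. by rewrite /dotv -sumrN; apply: eq_bigr => i _; rewrite mxE mulrN. Qed.
Lemma dotvNl w x : dotv (- x) w = - dotv x w.
Proof. by rewrite /dotv -sumrN; apply: eq_bigr => i _; rewrite mxE mulNr. Qed.
Lemma dotvZr w a x : dotv w (a *: x) = a * dotv w x.
Proof. by rewrite /dotv mulr_sumr; apply: eq_bigr => i _; rewrite mxE mulrCA. Qed.
Lemma dotvC w x : dotv w x = dotv x w.
Proof. by rewrite /dotv; apply: eq_bigr => i _; rewrite mulrC. Qed.
Lemma dotv_ge0 w : 0 <= dotv w w.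
Proof. by apply: sumr_ge0 => i _; rewrite -expr2 sqr_ge0. Qed.
Lemma dotv_eq0 w : dotv w w = 0 -> w = 0.
Proof.
move=> /eqP; rewrite psumr_eq0; last by move=> i _; rewrite -expr2 sqr_ge0.
move=> /allP H; apply/rowP => i; rewrite mxE.
by have := H i (mem_index_enum _); rewrite /= mulf_eq0 orbb => /eqP.
Qed.
Lemma dotv_term (w : V) (i : 'I_m) : w ord0 i ^+ 2 <= dotv w w.
Proof.
rewrite /dotv (bigD1 i) //= -expr2 lerDl; apply: sumr_ge0 => j _.
by rewrite -expr2 sqr_ge0.
Qed.

Lemma dotvZl w a x : dotv (a *: x) w = a * dotv x w.
Proof. by rewrite dotvC dotvZr dotvC. Qed.

Lemma quad_expand (w d : V) t :
  dotv (w - t *: d) (w - t *: d) =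
  dotv w w - 2 * t * dotv w d + t ^+ 2 * dotv d d.
Proof.
rewrite !dotvDl !dotvDr !dotvNl !dotvNr !dotvZl !dotvZr (dotvC d w).
by rewrite expr2; ring.
Qed.

Lemma sep (P : set V) (v : V) : P !=set0 ->
  (forall w e, 0 < e -> exists2 y, P y & dotv w v - e < dotv w y) ->
  closure (convP P) v.
Proof.
move=> [x0 Px0] H.
pose f (x : V) := \sum_(i < m) (v ord0 i - x ord0 i) * (v ord0 i - x ord0 i).
have fE x : f x = dotv (v - x) (v - x).
  by rewrite /f /dotv; apply: eq_bigr => i _; rewrite !mxE.
have fc : continuous f.
  apply: (@continuous_big _ _ +%R 0 xpredT) => [|i _]; first exact: add_continuous.
  move=> x.
  have hc : {for x, continuous (fun x : V => v ord0 i - x ord0 i)}.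
    apply: (@continuousB _ _ _ (fun=> v ord0 i) (fun x : V => x ord0 i)).
      exact: cst_continuous.
    exact: (@coord_continuous R 1 m ord0 i).
  exact: (@continuousM _ _ (fun x : V => v ord0 i - x ord0 i) (fun x : V => v ord0 i - x ord0 i) x hc hc).
have f_ge0 x : 0 <= f x by rewrite fE dotv_ge0.
pose M := f x0 + 1.
have M1 : 1 <= M by rewrite /M lerDr.
pose Bx := [set x : V | forall i, `[v ord0 i - M, v ord0 i + M]%classic (x ord0 i)].
have inB x : f x <= f x0 -> Bx x.
  move=> fx i /=; rewrite in_itv /=.
  have : (v - x) ord0 i ^+ 2 <= f x0 by rewrite (le_trans (dotv_term _ _)) // -fE.
  rewrite !mxE => hsq.
  have : `|v ord0 i - x ord0 i| <= M.
    rewrite leNgt; apply/negP => hM.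
    have : M * 1 < `|v ord0 i - x ord0 i| * `|v ord0 i - x ord0 i|.
      by apply: ltr_pM => //; [lra | apply: le_lt_trans hM].
    by rewrite -normrM -expr2 ger0_norm ?sqr_ge0 // /M; lra.
  rewrite ler_norml => /andP[h1 h2].
  by apply/andP; split; lra.
pose Kc := closure (convP P) `&` Bx.
have Kcomp : compact Kc.
  rewrite /Kc setIC; apply: compact_closedI; last exact: closed_closure.
  apply: (@rV_compact _ _ (fun i => `[v ord0 i - M, v ord0 i + M]%classic)).
  by move=> i; exact: segment_compact.
have Kx0 : Kc x0.
  by split; [apply: subset_closure; apply: convP_sub | apply: inB].
have [p pK pmin] := EVT_min_rV (ex_intro _ x0 Kx0) Kcomp (@continuous_subspaceT _ _ Kc f fc).
move: pK; rewrite inE => -[pcl pB].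
have claim1 x : convP P x -> f p <= f x.
  move=> cx; have [fx|fx] := leP (f x) (f x0).
    by apply: pmin; rewrite inE; split; [exact: subset_closure | exact: inB].
  apply: le_trans (ltW fx); apply: pmin; rewrite inE.
  by split; [apply: subset_closure; apply: convP_sub | apply: inB].
have claim2 y t : convP P y -> 0 <= t <= 1 -> f p <= f ((1 - t) *: p + t *: y).
  move=> cy t01.
  pose g x := f ((1 - t) *: x + t *: y).
  have gc : continuous g.
    move=> z; apply: (@continuous_comp _ _ _ (fun x : V => (1 - t) *: x + t *: y) f).
      apply: (@continuousD _ _ _ (fun x : V => (1 - t) *: x) (fun=> t *: y)); last exact: cst_continuous.
      exact: (@continuousZl_tmp _ _ _ id (1 - t) z cvg_id).
    exact: fc.
  have clS : closed (g @^-1` [set r | f p <= r]).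
    by apply: preimage_closed; [move=> z _; exact: gc | exact: closed_ge].
  have : closure (convP P) `<=` g @^-1` [set r | f p <= r].
    have e := (closure_id _).1 clS.
    rewrite [X in _ `<=` X]e; apply: closureS => q1 q2 /=.
    by apply: claim1; apply: convP_comb.
  by move=> /(_ p pcl).
pose w := v - p.
have key y : convP P y -> dotv w (y - p) <= 0.
  move=> cy; set a := dotv w (y - p); set b := dotv (y - p) (y - p).
  have b0 : 0 <= b by exact: dotv_ge0.
  have ineq t : 0 < t <= 1 -> 2 * a <= t * b.
    move=> /andP[t0 t1].
    have := claim2 y t cy (introT andP (conj (ltW t0) t1)).
    have -> : (1 - t) *: p + t *: y = p + t *: (y - p).
      by apply/rowP => j; rewrite !mxE; ring.
    rewrite !fE opprD addrA -/w quad_expand -/a -/b => h.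
    have : t * (2 * a) <= t * (t * b) by rewrite -subr_ge0; rewrite -subr_ge0 in h; nra.
    by rewrite ler_pM2l.
  rewrite leNgt; apply/negP => a0.
  have ab0 : 0 < a + b + 1 by lra.
  have := ineq (a / (a + b + 1)).
  rewrite divr_gt0 //= ler_pdivrMr // mul1r.
  have -> : (a <= a + b + 1) = true by apply/idP; lra.
  move=> /(_ isT).
  rewrite mulrAC ler_pdivlMr //.
  nra.
have ww0 : dotv w w = 0.
  apply/eqP; rewrite eq_le dotv_ge0 andbT leNgt; apply/negP => wpos.
  have [y Py hy] := H w (dotv w w / 2) (divr_gt0 wpos (ltr0Sn _ 1)).
  have := key y (convP_sub Py).
  rewrite dotvDr dotvNr.
  have : dotv w v = dotv w p + dotv w w.
    by rewrite -dotvDr /w [p + _]addrC subrK.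
  lra.
have vp : v = p by apply/eqP; rewrite -subr_eq0; apply/eqP/dotv_eq0.
by rewrite vp.
Qed.

End real.

Section general.
Variables (R : realType) (K : numFieldType) (nK : K -> R) (m0 : nat)
  (co : K -> 'I_m0 -> R) (rho : K -> R) (cw : ('I_m0 -> R) -> K) (emb : R -> K).
Hypotheses (coD : forall a b k, co (a + b) k = co a k + co b k)
  (co0 : forall k, co 0 k = 0)
  (coM : forall r z k, co (emb r * z) k = r * co z k)
  (rhoD : forall a b, rho (a + b) = rho a + rho b)
  (rho0 : rho 0 = 0)
  (rhoB : forall a b, rho (a - b) = rho a - rho b)
  (rhoM : forall r z, rho (emb r * z) = r * rho z)
  (rho1 : rho 1 = 1)
  (rho_ge0 : forall l, 0 <= l -> 0 <= rho l)
  (rho_cw : forall w z, rho (cw w * z) = \sum_k w k * co z k)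
  (rho_le : forall z, rho z <= nK z)
  (nKN : forall z, nK (- z) = nK z)
  (emb_ge0 : forall r, 0 <= r -> 0 <= emb r)
  (embD : forall a b, emb (a + b) = emb a + emb b)
  (emb0 : emb 0 = 0) (emb1 : emb 1 = 1)
  (pos_emb : forall l, 0 <= l -> l = emb (rho l))
  (nbhs_co : forall (z : K^o) (N : set K^o), nbhs z N ->
     exists2 d : R, 0 < d & forall z', (forall k, `|co z' k - co z k| < d) -> N z')
  (nbhs_rho : forall (z : K^o) (e : R), 0 < e ->
     nbhs z [set z' : K^o | `|rho z' - rho z| < e]).

Lemma co_sum n (x : 'I_n -> K) k : co (\sum_(j < n) x j) k = \sum_(j < n) co (x j) k.
Proof. by apply: (big_morph (co^~ k)) => // a b; rewrite coD. Qed.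

Lemma rho_sum n (x : 'I_n -> K) : rho (\sum_(j < n) x j) = \sum_(j < n) rho (x j).
Proof. exact: (big_morph rho rhoD rho0). Qed.

Lemma emb_sum n (x : 'I_n -> R) : emb (\sum_(j < n) x j) = \sum_(j < n) emb (x j).
Proof. exact: (big_morph emb embD emb0). Qed.

Lemma dual_sum (X : topologicalLmodType K) (s : {ptws X -> K^o}) n (c : 'I_n -> K)
  (A : 'I_n -> X) : is_dual s ->
  s (\sum_(i < n) c i *: A i) = \sum_(i < n) c i * s (A i).
Proof.
move=> [lin _].
have s0 : s 0 = 0.
  have := lin (-1) 0 0; rewrite scaler0 addr0 mulN1r addNr //.
elim: n c A => [|n IH] c A; first by rewrite !big_ord0.
rewrite !big_ord_recr /= addrC lin IH addrC //.
Qed.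

Lemma dot_mxvec n (w : 'rV[R]_(n * m0)) (M : 'M[R]_(n, m0)) :
  dotv w (mxvec M) = \sum_(i < n) \sum_(k < m0) vec_mx w i k * M i k.
Proof.
rewrite /dotv -{1}(vec_mxK w) (reindex _ (curry_mxvec_bij _ _)) /=.
rewrite pair_bigA; apply: eq_bigr => [[i k]] _ /=.
by rewrite !mxvecE.
Qed.


Lemma dH_ext (X : topologicalLmodType K) (F1 F2 : set {ptws X -> K^o}) A :
  dH_at nK F1 F2 A = 0%E ->
  (forall s, F1 s -> forall e : R, 0 < e -> exists2 t, F2 t & nK (s A - t A) < e) /\
  (forall t, F2 t -> forall e : R, 0 < e -> exists2 s, F1 s & nK (s A - t A) < e).
Proof.
rewrite /dH_at => /eqP; rewrite eq_le ge_max => /andP[/andP[h1 h2] _]; split.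
- move=> s Fs e e0.
  have : (ereal_inf [set (nK (s A - t A))%:E | t in F2] < e%:E)%E.
    apply: le_lt_trans (le_trans _ h1) _; last by rewrite lte_fin.
    by apply: ereal_sup_ubound; exists s.
  by move=> /ereal_inf_lt [y [t Ft <-]]; rewrite lte_fin => ?; exists t.
- move=> t Ft e e0.
  have : (ereal_inf [set (nK (s A - t A))%:E | s in F1] < e%:E)%E.
    apply: le_lt_trans (le_trans _ h2) _; last by rewrite lte_fin.
    by apply: ereal_sup_ubound; exists t.
  by move=> /ereal_inf_lt [y [s Fs <-]]; rewrite lte_fin => ?; exists s.
Qed.

Lemma incl (X : topologicalLmodType K) (F1 F2 : set {ptws X -> K^o}) :
  F2 !=set0 -> F1 `<=` @is_dual K X -> F2 `<=` @is_dual K X ->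
  (forall A s, F1 s -> forall e : R, 0 < e -> exists2 t, F2 t & nK (s A - t A) < e) ->
  clco F1 `<=` clco F2.
Proof.
move=> [t0 F2t0] d1 d2 H g [gcl gd]; split => //.
pose D := [set ip : seq X * R | 0 < ip.2].
pose B (ip : seq X * R) := [set h : {ptws X -> K^o} | conv_hull F2 h /\
   forall A, A \in ip.1 -> forall k, `|co (h A) k - co (g A) k| < ip.2].
have core : forall ip, D ip -> B ip !=set0.
  move=> [pts e] /= e0.
  pose n := size pts.
  pose A (i : 'I_n) := nth 0 pts i.
  pose vec (s : {ptws X -> K^o}) : 'rV[R]_(n * m0) :=
    mxvec (\matrix_(i < n, k < m0) co (s (A i)) k).
  pose P := [set vec s | s in F2].
  have Hsep : closure (convP P) (vec g).
    apply: sep; first by exists (vec t0); exists t0.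
    move=> w e' e'0.
    pose As := \sum_(i < n) cw (fun k => vec_mx w i k) *: A i.
    have rhoE s : is_dual s -> rho (s As) = dotv w (vec s).
      move=> ds; rewrite dual_sum // rho_sum dot_mxvec; apply: eq_bigr => i _.
      by rewrite rho_cw; apply: eq_bigr => k _; rewrite mxE.
    have e3 : 0 < e' / 3 by rewrite divr_gt0.
    have Nb : nbhs g [set h : {ptws X -> K^o} | `|rho (h As) - rho (g As)| < e' / 3].
      exact: (@proj_continuous X (fun _ => K^o) As g _ (nbhs_rho (g As) e3)).
    have [h [ch hclose]] := gcl _ Nb.
    move: ch => [n1 [l [s [l0 ls sF hE]]]].
    have hAs : h As = \sum_(j < n1) l j * s j As by rewrite hE.
    have rhoh : rho (h As) = \sum_(j < n1) rho (l j) * rho (s j As).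
      rewrite hAs rho_sum; apply: eq_bigr => j _.
      by rewrite {1}(pos_emb (l0 j)) rhoM.
    have rl1 : \sum_(j < n1) rho (l j) = 1 by rewrite -rho_sum ls rho1.
    have [j hj] : exists j, rho (h As) - e' / 3 < rho (s j As).
      apply: contrapT => hn.
      have hle j : rho (s j As) <= rho (h As) - e' / 3.
        by rewrite leNgt; apply/negP => hlt; apply: hn; exists j.
      have : \sum_(j < n1) rho (l j) * rho (s j As) <=
             \sum_(j < n1) rho (l j) * (rho (h As) - e' / 3).
        by apply: ler_sum => i _; apply: ler_wpM2l; [exact: rho_ge0 | exact: hle].
      rewrite -mulr_suml rl1 mul1r -rhoh; lra.
    have [tau Ftau htau] := H As (s j) (sF j) (e' / 3) e3.
    exists (vec tau); first by exists tau.
    rewrite -rhoE // -rhoE; last exact: d2.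
    have := rho_le (s j As - tau As); rewrite rhoB.
    move: hclose; rewrite /= ltr_norml => /andP[hc1 hc2].
    lra.
  have [q [[n2 [lam [p [lam0 lams pP qE]]]] qb]] := Hsep _ (nbhsx_ballx (vec g) e e0).
  have /choice [tau Htau] : forall j, exists s, F2 s /\ vec s = p j.
    by move=> j; have [s Fs <-] := pP j; exists s.
  exists (fun x => \sum_(j < n2) emb (lam j) * tau j x); split.
    exists n2, (fun j => emb (lam j)), tau; split => //.
    - by move=> j; apply: emb_ge0.
    - by rewrite -emb_sum lams emb1.
    - by move=> j; exact: (Htau j).1.
  move=> A' HA' k /=.
  have io : (index A' pts < n)%N by rewrite index_mem.
  pose i := Ordinal io.
  have Ai : A i = A' by rewrite /A /= nth_index.
  have e1 : co (\sum_(j < n2) emb (lam j) * tau j A') k = q ord0 (mxvec_index i k).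
    rewrite co_sum qE summxE; apply: eq_bigr => j _.
    by rewrite coM -(Htau j).2 mxE mxvecE mxE Ai.
  have e2 : co (g A') k = vec g ord0 (mxvec_index i k) by rewrite mxvecE mxE Ai.
  rewrite e1 e2 distrC.
  move: qb; rewrite /ball /= => -[_ /(_ ord0 (mxvec_index i k))].
  by rewrite -ball_normE /ball_ /=.
have FB : Filter (filter_from D B).
  apply: filter_from_filter; first by exists ([::], 1); rewrite /D /= ltr01.
  move=> [p1 e1] [p2 e2] /= e10 e20; exists (p1 ++ p2, Num.min e1 e2) => /=.
    by rewrite /D /= lt_min e10.
  move=> h [ch hb]; split; split => // A HA k.
    by apply: lt_le_trans (hb A _ k) _; [rewrite mem_cat HA | rewrite ge_min lexx].
  by apply: lt_le_trans (hb A _ k) _; [rewrite mem_cat HA orbT | rewrite ge_min lexx orbT].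
have PF : ProperFilter (filter_from D B) by apply: filter_from_proper.
rewrite closureEcvg; exists (filter_from D B) => //; split.
  apply/pointwise_cvgP => // t N Nn.
  have [d d0 Hd] := nbhs_co Nn.
  exists ([:: t], d) => //= h [_ hb]; apply: Hd => k; apply: hb; by rewrite inE eqxx.
move=> S /= HS; exists ([::], 1); first by rewrite /D /= ltr01.
by move=> h [ch _]; exact: HS.
Qed.

Lemma prop_general : prop3p10_over nK.
Proof.
move=> X _ _ F1 F2 F10 F20 d1 d2 _ _ hd.
apply/seteqP; split.
- apply: incl => // A s Fs; exact: (dH_ext (hd A)).1.
- apply: incl => // A s Fs e e0.
  have [t Ft ht] := (dH_ext (hd A)).2 s Fs e e0.
  by exists t => //; rewrite -nKN opprB.
Qed.

End general.

Lemma real_case (R : realType) : @prop3p10_over R (R : numFieldType) (@Num.norm R R).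
Proof.
apply: (@prop_general R R (@Num.norm R R) 1 (fun z _ => z) id (fun w => w ord0) id) => //=.
- by move=> w z; rewrite big_ord1.
- by move=> z; apply: ler_norm.
- by move=> z; rewrite normrN.
- move=> z N /nbhs_ballP [d d0 hd]; exists d => // z' hz; apply: hd.
  by rewrite -ball_normE /ball_ /= distrC; exact: hz ord0.
- move=> z e e0; apply/nbhs_ballP; exists e => // z'.
  by rewrite -ball_normE /ball_ /= distrC.
Qed.
Section cplx.
Variable R : realType.
Definition coC (z : R[i]) (k : 'I_2) : R :=
  if k == ord0 then complex.Re z else complex.Im z.
Definition cwC (w : 'I_2 -> R) : R[i] := (w ord0 +i* - w ord_max)%C.
Definition embC (r : R) : R[i] := (r%:C)%C.

Lemma sqrt_le_sum (a b : R) : Num.sqrt (a ^+ 2 + b ^+ 2) <= `|a| + `|b|.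
Proof.
rewrite -[X in _ <= X]ger0_norm ?addr_ge0 // -sqrtr_sqr; apply: ler_wsqrtr.
have ha := real_normK (num_real a); have hb := real_normK (num_real b).
have : 0 <= `|a| * `|b| by rewrite mulr_ge0.
rewrite sqrrD; nra.
Qed.

Lemma c1 : forall a b k, coC (a + b) k = coC a k + coC b k.
Proof. by move=> [a1 a2] [b1 b2] k; rewrite /coC /=; case: ifP. Qed.
Lemma c2 : forall k, coC 0 k = 0.
Proof. by move=> k; rewrite /coC; case: ifP. Qed.
Lemma c3 : forall r z k, coC (embC r * z) k = r * coC z k.
Proof. by move=> r [a b] k; rewrite /coC /=; case: ifP => _; ring. Qed.
Lemma c4 : forall a b : R[i], complex.Re (a + b) = complex.Re a + complex.Re b.
Proof. by move=> [a1 a2] [b1 b2]. Qed.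
Lemma c5 : forall a b : R[i], complex.Re (a - b) = complex.Re a - complex.Re b.
Proof. by move=> [a1 a2] [b1 b2]. Qed.
Lemma c6 : forall r (z : R[i]), complex.Re (embC r * z) = r * complex.Re z.
Proof. by move=> r [a b] /=; ring. Qed.
Lemma c7 : forall l : R[i], 0 <= l -> 0 <= complex.Re l.
Proof. by move=> [a b]; rewrite /Order.le /= => /andP[_ h]. Qed.
Lemma c8 : forall w (z : R[i]), complex.Re (cwC w * z) = \sum_k w k * coC z k.
Proof.
move=> w [x y]; rewrite /= big_ord_recr big_ord1 /coC /=.
have -> : widen_ord (leqnSn 1) ord0 = ord0 :> 'I_2 by apply/val_inj.
ring.
Qed.
Lemma c9 : forall z : R[i], complex.Re z <= Normc.normc z.
Proof.
move=> [a b] /=; apply: le_trans (ler_norm a) _; rewrite -sqrtr_sqr.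
by apply: ler_wsqrtr; rewrite lerDl sqr_ge0.
Qed.
Lemma c10 : forall r, 0 <= r -> 0 <= embC r.
Proof. by move=> r r0; rewrite /Order.le /= eqxx r0. Qed.
Lemma c11 : forall a b, embC (a + b) = embC a + embC b.
Proof. by move=> a b; apply/eqP; rewrite eq_complex /= addr0 !eqxx. Qed.
Lemma c12 : forall l : R[i], 0 <= l -> l = embC (complex.Re l).
Proof. by move=> [a b]; rewrite /Order.le /= => /andP[/eqP -> _]. Qed.
Lemma c13 : forall (z : R[i]^o) (N : set R[i]^o), nbhs z N ->
     exists2 d : R, 0 < d & forall z', (forall k, `|coC z' k - coC z k| < d) -> N z'.
Proof.
move=> z N /nbhs_ballP [[d1 d2] d0 hd].
move: d0; rewrite /Order.lt /= => /andP[/eqP d20 d10].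
exists (d1 / 2); first by apply: divr_gt0.
move=> z' hz; apply: hd; rewrite -ball_normE /ball_ /=.
have h1 := hz ord0; have h2 := hz ord_max.
move: h1 h2; rewrite /coC /=.
case: z z' {hz} => [a b] [a' b'] /= h1 h2.
rewrite normc_def /Order.lt /= d20 eqxx /=.
apply: le_lt_trans (sqrt_le_sum _ _) _.
rewrite distrC in h1; rewrite distrC in h2.
apply: lt_le_trans (ltrD h1 h2) _; rewrite -splitr; exact: lexx.
Qed.
Lemma c14 : forall (z : R[i]^o) (e : R), 0 < e ->
     nbhs z [set z' : R[i]^o | `|complex.Re z' - complex.Re z| < e].
Proof.
move=> z e e0; apply/nbhs_ballP; exists (e%:C)%C => [|z']; first by rewrite /Order.lt /= eqxx.
rewrite -ball_normE /ball_ /= => hz.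
have := le_lt_trans (normc_ge_Re (z - z')) hz; rewrite ltcR distrC.
by case: z z' {hz} => [a b] [a' b'].
Qed.
End cplx.

Lemma complex_case (R : realType) :
  @prop3p10_over R (R[i] : numFieldType) (@Normc.normc R).
Proof.
apply: (@prop_general R (R[i] : numFieldType) (@Normc.normc R) 2 (@coC R)
  (@complex.Re R) (@cwC R) (@embC R)
  (@c1 R) (@c2 R) (@c3 R) (@c4 R) erefl (@c5 R) (@c6 R) erefl (@c7 R) (@c8 R)
  (@c9 R) (@normcN R) (@c10 R) (@c11 R) _ _ (@c12 R) (@c13 R) (@c14 R)).
- by apply/eqP; rewrite eq_complex /= !eqxx.
- by apply/eqP; rewrite eq_complex /= !eqxx.
Qed.

Unset Implicit Arguments.
Theorem proposition3p10 (R : realType) :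
  @prop3p10_over R (R : numFieldType) (@Num.norm R R) /\
  @prop3p10_over R (R[i] : numFieldType) (@Normc.normc R).
Proof. split; [exact: real_case | exact: complex_case]. Qed.
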